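(* Let $m\ge 2$. (1) If $m$ is even: $\mathrm{Spec}(\Gamma_{T_{4m}})=\{[0]^{m-2},[-1]^1,[\tfrac{1+\sqrt{8m-7}}{2}]^1,[\tfrac{1-\sqrt{8m-7}}{2}]^1\}$, $E=1+\sqrt{8m-7}$; $\mathrm{L\text{-}Spec}=\{[0]^1,[2]^{m-2},[m+1]^2\}$, $LE=\frac{4(m-1)(m-2)}{m+1}+4$; $\mathrm{Q\text{-}Spec}=\{[2]^{m-2},[m-1]^1,[\tfrac{m+3+\sqrt{(m-1)(m+7)}}{2}]^1,[\tfrac{m+3-\sqrt{(m-1)(m+7)}}{2}]^1\}$, and $SE=4$ if $m=2$, $SE=\frac{4(m-1)(m-2)}{m+1}+(m-1)(\sqrt{1+\frac{8}{m-1}}-1)$ if $m\ne2$. (2) If $m$ is odd: $\mathrm{Spec}(\Gamma_{T_{4m}})=\{[0]^{m-1},[2\sqrt{\tfrac{m-1}{2}}]^1,[-2\sqrt{\tfrac{m-1}{2}}]^1\}$, $E=4\sqrt{\frac{m-1}{2}}$; $\mathrm{L\text{-}Spec}=\mathrm{Q\text{-}Spec}=\{[0]^1,[2]^{m-2},[m-1]^1,[m+1]^1\}$, and $LE=SE=\frac{4(m-1)(m-3)}{m+1}+4$.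
   Context: $T_{4m}=\langle x,y\mid x^{2m}=1,\ x^m=y^2,\ y^{-1}xy=x^{-1}\rangle$ (dicyclic group). For a finite non-abelian group $G$ with center $Z(G)$, the NCCC-graph $\Gamma_G$ has vertex set $\{x^G: x\in G\setminus Z(G)\}$ ($x^G$ the conjugacy class of $x$), distinct vertices $x^G,y^G$ adjacent iff $x'y'\neq y'x'$ for all $x'\in x^G,y'\in y^G$. For a simple graph with adjacency matrix $A$, degree matrix $D$, $L=D-A$, $Q=D+A$; Spec, L-Spec, Q-Spec are eigenvalue multisets of $A,L,Q$, $[\lambda]^k$ meaning eigenvalue $\lambda$ of multiplicity $k$ (multiplicity $0$ means absent). $E=\sum_{\lambda\in\mathrm{Spec}}|\lambda|$; with $\Delta=2|E(\mathcal G)|/|V(\mathcal G)|$, $LE=\sum_{\beta\in\mathrm{L\text{-}Spec}}|\beta-\Delta|$, $SE=\sum_{\gamma\in\mathrm{Q\text{-}Spec}}|\gamma-\Delta|$. All quantities refer to $\Gamma_{T_{4m}}$. *)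

(* Defs.v *)
From HB Require Import structures.
From mathcomp Require Import all_boot all_order all_algebra all_fingroup all_solvable.
Set Implicit Arguments. Unset Strict Implicit. Unset Printing Implicit Defensive.
Import Order.TTheory GRing.Theory Num.Theory.
Local Open Scope ring_scope.

Section NCCC.
Variable gT : finGroupType.
Local Open Scope group_scope.

Definition nccc_vertices (G : {group gT}) : {set {set gT}} :=
  [set x ^: G | x in G :\: 'Z(G)].

Definition nccc_adj (C D : {set gT}) : bool :=
  (C != D) && [forall a in C, forall b in D, a * b != b * a].
End NCCC.

Section Spectral.
Variable R : rcfType.

Definition nccc_adjmx (gT : finGroupType) (G : {group gT})
  : 'M[R]_#|nccc_vertices G| :=
  \matrix_(i, j) (nccc_adj (enum_val i) (enum_val j))%:R.

Definition degmx n (A : 'M[R]_n) : 'M[R]_n := diag_mx (\row_i \sum_j A i j).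
Definition laplacian n (A : 'M[R]_n) : 'M[R]_n := degmx A - A.
Definition signless_laplacian n (A : 'M[R]_n) : 'M[R]_n := degmx A + A.

Definition avg_degree n (A : 'M[R]_n) : R := (\sum_i \sum_j A i j) / n%:R.

Definition is_spectrum n (M : 'M[R]_n) (s : seq R) : Prop :=
  char_poly M = \prod_(l <- s) ('X - l%:P).

Definition spec_energy n (M : 'M[R]_n) (c e : R) : Prop :=
  exists s, is_spectrum M s /\ e = \sum_(l <- s) `|l - c|.
End Spectral.

(* Main.v *)
Require Import Defs.
From HB Require Import structures.
Set Warnings "-notation-overridden,-deprecated,-ambiguous-paths".
From mathcomp Require Import all_boot all_order all_algebra all_fingroup all_solvable.
From mathcomp Require Import ring lra zify.
Set Implicit Arguments. Unset Strict Implicit. Unset Printing Implicit Defensive.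
Import Order.TTheory GRing.Theory Num.Theory.
Local Open Scope ring_scope.

Section LA.
Variable R : rcfType.

Definition pat (k : nat) (a b c d : R) : 'M[R]_(2+k) :=
  \matrix_(i, j) (if (i < 2)%N && (j < 2)%N then (if i == j then b else d)
                  else if (i < 2)%N || (j < 2)%N then c else (if i == j then a else 0)).

Lemma char_pat_mx k a b c d :
  char_poly_mx (pat k a b c d) =
  block_mx (\matrix_(i, j) (if i == j then 'X - b%:P else - d%:P) : 'M_2)
           (const_mx (- c%:P)) (const_mx (- c%:P)) (('X - a%:P)%:M).
Proof.
apply/matrixP => i j; rewrite !mxE.
case: splitP => i' Hi; rewrite !mxE; case: splitP => j' Hj; rewrite !mxE /=.

- have -> : (i == j) = (i' == j') by rewrite -val_eqE /= Hi Hj.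
  by case: (i' == j'); rewrite ?mulr1n ?mulr0n ?sub0r.
- have -> : (i == j) = false.
    apply/negbTE; rewrite -val_eqE /= Hi Hj; apply/eqP => E.
    by have := ltn_ord i'; rewrite E ltnNge leq_addr.
  by rewrite mulr0n sub0r.
- have -> : (i == j) = false.
    apply/negbTE; rewrite -val_eqE /= Hi Hj; apply/eqP => E.
    by have := ltn_ord j'; rewrite -E ltnNge leq_addr.
  by rewrite mulr0n sub0r.
- have -> : (i == j) = (i' == j') by rewrite -val_eqE /= Hi Hj eqn_add2l.
  by case: (i' == j'); rewrite ?mulr1n ?mulr0n ?polyC0 ?subr0.
Qed.

Lemma det_mx2 (T : comNzRingType) (M : 'M[T]_2) : \det M = M 0 0 * M 1 1 - M 0 1 * M 1 0.
Proof.
rewrite (expand_det_row _ 0) !big_ord_recl big_ord0 addr0 /cofactor !det_mx11 !mxE /=.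
rewrite !expr0 !expr1 mul1r mulN1r mulrN.
have E1 : forall (u v : 'I_2), val u = val v -> u = v by move=> u v; exact: val_inj.
by rewrite [lift 0 0](E1 _ 1) // [lift 1 0](E1 _ 0).
Qed.

Lemma char_pat_step k a b c d :
  char_poly (pat k a b c d) * ('X - a%:P) ^+ 2 =
  \det ((\matrix_(i, j) (if i == j then 'X - b%:P else - d%:P) : 'M_2) *m ('X - a%:P)%:M
        + const_mx (- c%:P) *m (const_mx c%:P : 'M_(k,2))) * ('X - a%:P) ^+ k.
Proof.
set t := 'X - a%:P.
set E := block_mx (t%:M : 'M_2) (0 : 'M_(2,k)) (const_mx c%:P : 'M_(k,2)) (1%:M : 'M_k).
have dE : \det E = t ^+ 2 by rewrite det_lblock det_scalar det1 mulr1.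
rewrite /char_poly char_pat_mx -dE -det_mulmx mulmx_block !mulmx0 !mulmx1 !add0r -/t.

have -> : const_mx (- c%:P) *m t%:M + t%:M *m (const_mx c%:P : 'M_(k,2)) = 0.
  apply/matrixP => i j; rewrite mul_mx_scalar mul_scalar_mx !mxE; ring.
by rewrite det_ublock det_scalar.
Qed.

Lemma char_pat k a b c d : (0 < k)%N ->
  char_poly (pat k a b c d) = ('X - a%:P) ^+ k.-1 * ('X - (b - d)%:P) *
     (('X - a%:P) * ('X - (b + d)%:P) - (k%:R * 2 * c ^+ 2)%:P).
Proof.
case: k => [//|k] _ /=.
have tn0 : ('X - a%:P) ^+ 2 != 0 by rewrite expf_neq0 // polyXsubC_eq0.
apply: (mulIf tn0); rewrite char_pat_step det_mx2 mul_mx_scalar !mxE /=.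
have hs : forall (i j : 'I_2), \sum_(l < k.+1) (const_mx (- c%:P) : 'M_(2, k.+1)) i l * (const_mx c%:P : 'M_(k.+1, 2)) l j
   = - (c%:P * c%:P) * k.+1%:R.
  move=> i j; under eq_bigr do rewrite !mxE.
  by rewrite sumr_const card_ord mulr_natr mulNr.
rewrite !hs.
rewrite !polyCB !polyCD !polyCM !polyC_natr exprS.
ring.
Qed.

Lemma char_poly_reindex n (A B : 'M[R]_n) (f : 'I_n -> 'I_n) :
  injective f -> (forall i j, A (f i) (f j) = B i j) -> char_poly A = char_poly B.
Proof.
move=> finj hAB; set s := perm finj; rewrite /char_poly.
have -> : char_poly_mx B = row_perm s (col_perm s (char_poly_mx A)).
  by apply/matrixP=> i j; rewrite !mxE !permE (inj_eq finj) hAB.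
rewrite row_permE col_permE !det_mulmx mulrCA mulrA -det_mulmx.
by rewrite det_mulmx -mulrA -det_mulmx -perm_mxM mulgV perm_mx1 det1 mulr1.
Qed.

Lemma sum_split2 k (F : 'I_(2 + k) -> R) :
  \sum_j F j = F (lshift k 0) + F (lshift k 1) + \sum_(j < k) F (rshift 2 j).
Proof.
rewrite big_split_ord /= !big_ord_recl big_ord0 addr0.
by congr (_ + F (lshift k _) + _); exact: val_inj.
Qed.

Lemma pat_rowsum k a b c d (i : 'I_(2 + k)) :
  \sum_j pat k a b c d i j = if (i < 2)%N then b + d + c * k%:R else c *+ 2 + a.
Proof.
rewrite sum_split2 !mxE /=.
under eq_bigr do rewrite !mxE /=.
case: i => [[|[|i]] Hi] /=.
- by rewrite sumr_const card_ord mulr_natr.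
- by rewrite sumr_const card_ord mulr_natr (addrC d).
have ik : (i < k)%N by rewrite -(ltn_add2l 2).
rewrite (bigD1 (Ordinal ik)) //= big1 ?addr0.
  have -> : (Ordinal Hi == rshift 2 (Ordinal ik)) = true by apply/eqP/val_inj.
  by rewrite mulr2n.
move=> j hj; rewrite ifN //; apply: contra hj => /eqP h; apply/eqP/val_inj.
by move: h => /(congr1 val) /= [->].
Qed.

Lemma transfer n (A : 'M[R]_n) k (e : R) (f : 'I_(2 + k) -> 'I_n) :
  injective f -> n = (2 + k)%N -> (forall i j, A (f i) (f j) = pat k 0 0 1 e i j) ->
  [/\ char_poly A = char_poly (pat k 0 0 1 e),
      char_poly (laplacian A) = char_poly (pat k 2 (e + k%:R) (-1) (-e)),
      char_poly (signless_laplacian A) = char_poly (pat k 2 (e + k%:R) 1 e) &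
      avg_degree A = (e *+ 2 + k%:R *+ 4) / (k + 2)%:R ].
Proof.
move=> finj hn hA; subst n.
have deg : forall i, \sum_j A (f i) j = if (i < 2)%N then e + k%:R else 2.
  move=> i; rewrite (reindex_inj finj) /=.
  under eq_bigr do rewrite hA.
  by rewrite pat_rowsum add0r mul1r addr0.
split.
- exact: char_poly_reindex finj hA.
- apply: (char_poly_reindex finj) => i j.
  rewrite /laplacian /degmx !mxE (inj_eq finj) deg hA !mxE.
  case: (ltnP i 2) => hi; case: (ltnP j 2) => hj /=;
    [ by case: eqP; rewrite ?mulr1n ?mulr0n ?subr0 ?sub0r
    | have -> : (i == j) = false by apply/eqP => E; move: hi; rewrite E ltnNge hj
    | have -> : (i == j) = false by apply/eqP => E; move: hj; rewrite -E ltnNge hi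
    | by case: eqP; rewrite ?mulr1n ?mulr0n ?subr0 ]; by rewrite mulr0n sub0r.
- apply: (char_poly_reindex finj) => i j.
  rewrite /signless_laplacian /degmx !mxE (inj_eq finj) deg hA !mxE.
  case: (ltnP i 2) => hi; case: (ltnP j 2) => hj /=;
    [ by case: eqP; rewrite ?mulr1n ?mulr0n ?addr0 ?add0r
    | have -> : (i == j) = false by apply/eqP => E; move: hi; rewrite E ltnNge hj
    | have -> : (i == j) = false by apply/eqP => E; move: hj; rewrite -E ltnNge hi
    | by case: eqP; rewrite ?mulr1n ?mulr0n ?addr0 ]; by rewrite mulr0n add0r.
- rewrite /avg_degree (reindex_inj finj) /=.
  under eq_bigr do rewrite deg.
  rewrite sum_split2 /= sumr_const card_ord addnC.
  congr (_ / _); rewrite -mulr_natr; rewrite !mulrS !mulr0n; ring.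
Qed.
End LA.

Section Grp.
Variables (gT : finGroupType) (G : {group gT}) (x y : gT) (m : nat).
Local Open Scope group_scope.
Hypotheses (m2 : (2 <= m)%N) (hG : G :=: <<[set x; y]>>) (hx : x ^+ (2 * m) = 1)
  (hxy : x ^+ m = y ^+ 2) (hc : x ^ y = x^-1) (hcard : #|G| = (4 * m)%N).

Lemma xG : x \in G. Proof. by rewrite hG mem_gen // !inE eqxx. Qed.
Lemma yG : y \in G. Proof. by rewrite hG mem_gen // !inE eqxx orbT. Qed.

Lemma conjyX p : (x ^+ p) ^ y = (x ^+ p)^-1.
Proof. by rewrite conjXg hc expgVn. Qed.

Lemma yX p : y * x ^+ p = (x ^+ p)^-1 * y.
Proof. by rewrite [RHS]conjgC conjVg conjyX invgK. Qed.

Lemma xinv : x^-1 = x ^+ (2 * m).-1.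
Proof.
apply/eqP; rewrite eq_invg_mul -expgS prednK ?hx //.
by rewrite muln_gt0; apply: leq_trans m2.
Qed.

Lemma invX q : (x ^+ q)^-1 = x ^+ ((2 * m).-1 * q).
Proof. by rewrite expgM -xinv expgVn. Qed.

Lemma normal_form h : h \in G -> exists p, h = x ^+ p \/ h = x ^+ p * y.
Proof.
rewrite hG => /gen_prodgP [n [c hc' ->]].
elim: n c hc' => [|n IH] c hc'; first by exists 0%N; left; rewrite big_ord0.
rewrite big_ord_recr /=.
have [p hp] := IH (fun i => c (widen_ord (leqnSn n) i)) (fun i => hc' _).
have := hc' ord_max; rewrite !inE => /orP [] /eqP ->; case: hp => ->.
- by exists p.+1; left; rewrite expgSr.
- exists (p + (2 * m).-1)%N; right.
  by rewrite -mulgA -[x in y * x]expg1 yX expg1 xinv mulgA -expgD.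
- by exists p; right.
- exists (p + m)%N; left.
  by rewrite -mulgA expgD hxy.
Qed.


Lemma ord_x : #[x] = (2 * m)%N /\ forall p q, x ^+ p != x ^+ q * y.
Proof.
set C := <[x]>.
have sub : G \subset C :|: C :* y.
  apply/subsetP => h /normal_form [p [->|->]]; rewrite inE.
    by rewrite mem_cycle.
  by rewrite mem_rcoset mulgK mem_cycle orbT.
have le1 := subset_leq_card sub.
rewrite cardsU card_rcoset -orderE hcard in le1.
have le2 : (#[x] <= 2 * m)%N.
  by apply: dvdn_leq; [rewrite muln_gt0; apply: leq_trans m2 | rewrite order_dvdn hx].
have le3 : (#|C :&: C :* y| <= #[x])%N by rewrite orderE; apply/subset_leq_card/subsetIl.
have e0 : #|C :&: C :* y| = 0%N by lia.
split; first by lia.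
move=> p q; apply/negP => /eqP E.
move/eqP: e0; rewrite cards_eq0 => /eqP e0'.
have : x ^+ p \in C :&: C :* y by rewrite inE mem_cycle E mem_rcoset mulgK mem_cycle.
by rewrite e0' inE.
Qed.

Lemma ox : #[x] = (2 * m)%N. Proof. by case: ord_x. Qed.
Lemma neq_ab p q : x ^+ p != x ^+ q * y. Proof. by case: ord_x => _ ->. Qed.

Lemma expx_eq p q : (x ^+ p == x ^+ q) = (p == q %[mod 2 * m]).
Proof. by rewrite eq_expg_mod_order ox. Qed.

Lemma expx2 p q : x ^+ (p + p) = x ^+ (q + q) -> p = q %[mod m].
Proof.
move/eqP; rewrite expx_eq !addnn -!mul2n -!muln_modr eqn_pmul2l //.
by move/eqP.
Qed.

Lemma comm_y p : commute (x ^+ p) y -> (m %| p)%N.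
Proof.
move=> cy.
have E : (x ^+ p) ^ y = x ^+ p by rewrite conjgE cy mulKg.
rewrite conjyX in E.
have : p = 0 %[mod m].
  apply: expx2; rewrite expgD addn0 expg0.
  by rewrite -[X in X * _]E mulVg.
by rewrite mod0n /dvdn => ->.
Qed.

Lemma comm_b p q : commute (x ^+ p * y) (x ^+ q * y) -> p = q %[mod m].
Proof.
have h1 : forall a b, x ^+ a * y * (x ^+ b * y) = x ^+ a * (x ^+ b)^-1 * (y * y).
  by move=> a b; rewrite -mulgA [y * (_ * _)]mulgA yX !mulgA.
rewrite /commute !h1 => /mulIg E.
have E2 : x ^+ (p + p) = x ^+ (q + q).
  rewrite !expgD.
  transitivity (x ^+ p * (x ^+ q)^-1 * (x ^+ q * x ^+ p)); first by rewrite -mulgA mulKg.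
  rewrite E (commuteX2 q p (commute_refl x)).
  by rewrite -mulgA mulKg.
exact: expx2.
Qed.


Lemma oddN1 : odd (2 * m).-1.
Proof.
have h : (0 < 2 * m)%N by rewrite muln_gt0; apply: leq_trans m2.
by move: (prednK h) => E; move: (oddM 2 m); rewrite -E oddS /= => /negbFE.
Qed.

Lemma conj_bx p q : exists p', odd p' = odd p /\ (x ^+ p * y) ^ (x ^+ q) = x ^+ p' * y.
Proof.
exists ((2 * m).-1 * q + p + (2 * m).-1 * q)%N; split.
  by rewrite addnAC addnn oddD odd_double.
by rewrite conjgE -!mulgA yX invX !mulgA -!expgD.
Qed.

Lemma conj_by p : (x ^+ p * y) ^ y = x ^+ ((2 * m).-1 * p) * y.
Proof. by rewrite conjMg conjyX invX conjgE mulKg. Qed.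

Lemma conj_b p h : h \in G -> exists p', odd p' = odd p /\ (x ^+ p * y) ^ h = x ^+ p' * y.
Proof.
move=> /normal_form [q [->|->]]; first exact: conj_bx.
have [p' [op E]] := conj_bx p q.
rewrite conjgM E conj_by; exists ((2 * m).-1 * p')%N; split => //.
by rewrite oddM oddN1 op.
Qed.

Lemma class_b p z : z \in (x ^+ p * y) ^: G -> exists p', odd p' = odd p /\ z = x ^+ p' * y.
Proof. by case/imsetP => h hh ->; apply: conj_b. Qed.

Lemma class_a i z : z \in (x ^+ i) ^: G -> z = x ^+ i \/ z = (x ^+ i)^-1.
Proof.
case/imsetP => h /normal_form [q [->|->]] ->.
  by left; rewrite conjgE (commuteX2 i q (commute_refl x)) mulKg.
right; rewrite conjgM.
have -> : (x ^+ i) ^ (x ^+ q) = x ^+ i.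
  by rewrite conjgE (commuteX2 i q (commute_refl x)) mulKg.
exact: conjyX.
Qed.

Lemma shift_b j r : (x ^+ (j + j + r) * y) ^ (x ^+ j) = x ^+ r * y.
Proof.
by rewrite conjgE -!mulgA yX -(addnA j j r) (addnC j r) !expgD -!mulgA mulKg mulKVg.
Qed.

Lemma xm_center : x ^+ m \in 'Z(G).
Proof.
apply/centerP; split; first exact: groupX xG.
move=> h /normal_form [q [->|->]].
  exact: commuteX2 (commute_refl x).
apply: commuteM; first exact: commuteX2 (commute_refl x).
rewrite hxy; apply: commute_sym; apply: commuteX; exact: commute_refl.
Qed.

Lemma noncent_y : y \notin 'Z(G).
Proof.
apply/centerP => [[_ c]].
have := comm_y (commute_sym (c x xG) : commute (x ^+ 1) y).
by rewrite dvdn1 => /eqP E; move: m2; rewrite E.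
Qed.

Lemma noncent_xy : x * y \notin 'Z(G).
Proof.
apply/centerP => [[_ c]].
have cxy : commute x y.
  have := c x xG; rewrite /commute -mulgA => /mulgI ->; by [].
have := comm_y (cxy : commute (x ^+ 1) y).
by rewrite dvdn1 => /eqP E; move: m2; rewrite E.
Qed.

Lemma noncent_x l : (0 < l < m)%N -> x ^+ l \notin 'Z(G).
Proof.
move=> /andP [l0 lm]; apply/centerP => [[_ c]].
have := comm_y (c y yG).
by move/(dvdn_leq l0); rewrite leqNgt lm.
Qed.


Lemma adj_false (C D : {set gT}) a b : a \in C -> b \in D -> commute a b -> nccc_adj C D = false.
Proof.
move=> ha hb cab; apply/negbTE; rewrite /nccc_adj negb_and; apply/orP; right.
apply/negP => /forall_inP /(_ a ha) /forall_inP /(_ b hb).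
by rewrite cab eqxx.
Qed.

Lemma adj_true (C D : {set gT}) : C != D ->
  (forall a b, a \in C -> b \in D -> ~ commute a b) -> nccc_adj C D.
Proof.
move=> CD H; rewrite /nccc_adj CD /=.
apply/forall_inP => a ha; apply/forall_inP => b hb; apply/eqP => E.
exact: (H a b ha hb E).
Qed.

Lemma adj_sym (C D : {set gT}) : nccc_adj C D = nccc_adj D C.
Proof.
rewrite /nccc_adj eq_sym; congr (_ && _).
apply/forall_inP/forall_inP => H a ha; apply/forall_inP => b hb.
  by have := H b hb => /forall_inP /(_ a ha); rewrite eq_sym.
by have := H b hb => /forall_inP /(_ a ha); rewrite eq_sym.
Qed.

Lemma class_y : y ^: G = (x ^+ 0 * y) ^: G. Proof. by rewrite mul1g. Qed.
Lemma class_xy : (x * y) ^: G = (x ^+ 1 * y) ^: G. Proof. by rewrite expg1. Qed.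

Lemma bx_neq p l : (x ^+ p * y) ^: G != (x ^+ l) ^: G.
Proof.
apply/eqP => E; have := class_refl G (x ^+ p * y); rewrite E => /class_a [] h.
  by move: (neq_ab l p); rewrite h eqxx.
by move: (neq_ab ((2 * m).-1 * l) p); rewrite -invX h eqxx.
Qed.

Lemma adj_bx p l : (0 < l < m)%N -> nccc_adj ((x ^+ p * y) ^: G) ((x ^+ l) ^: G).
Proof.
move=> hl; apply: adj_true; first exact: bx_neq.
move=> a b /class_b [p' [_ ->]] hb cab.
have cl : commute (x ^+ l) (x ^+ p' * y).
  case: (class_a hb) => E; rewrite E in cab; apply: commute_sym => //.
  by rewrite -[x ^+ l]invgK; apply: commuteV.
have : commute (x ^+ l) y.
  move: cl; rewrite /commute mulgA (commuteX2 l p' (commute_refl x)) -!mulgA.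
  by move/mulgI.
move/comm_y; move: hl => /andP [l0 lm] /(dvdn_leq l0); by rewrite leqNgt lm.
Qed.

Lemma adj_xx l l' : nccc_adj ((x ^+ l) ^: G) ((x ^+ l') ^: G) = false.
Proof. by apply: (adj_false (class_refl _ _) (class_refl _ _)); exact: commuteX2. Qed.

Lemma xx_neq l l' : (0 < l < m)%N -> (0 < l' < m)%N -> (x ^+ l) ^: G = (x ^+ l') ^: G -> l = l'.
Proof.
move=> /andP [l0 lm] /andP [l0' lm'] E.
have := class_refl G (x ^+ l'); rewrite -E => /class_a [] h.
  move/eqP: h; rewrite expx_eq !modn_small; [by move/eqP | lia | lia].
have : x ^+ (l' + l) == x ^+ 0 by rewrite expgD h mulVg.
rewrite expx_eq mod0n modn_small; [by move/eqP; lia | lia].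
Qed.

Lemma bb_neq : y ^: G != (x * y) ^: G.
Proof.
apply/eqP => E; have := class_refl G (x * y); rewrite -E class_y => /class_b [p [op]].
rewrite -{1}[x]expg1 => /mulIg /eqP; rewrite expx_eq => /eqP /(congr1 odd).
rewrite !odd_mod ?oddM ?andFb //=.
by move: op => /= ->.
Qed.

Lemma adj_bb : nccc_adj (y ^: G) ((x * y) ^: G) = ~~ odd m.
Proof.
case: (boolP (odd m)) => om /=.
  have hm : m = (m./2 + m./2 + 1)%N by rewrite -{1}(odd_double_half m) om addnn addnC.
  have E : (x * y) ^: G = (x ^+ m * y) ^: G.
    rewrite class_xy -(shift_b (m./2) 1) -hm classGidl //; exact: groupX xG.
  apply: (adj_false (class_refl _ _) _ (_ : commute y (x ^+ m * y))).
    by rewrite E class_refl.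
  apply: commuteM; last exact: commute_refl.
  rewrite hxy; apply: commuteX; exact: commute_refl.
apply: adj_true; first exact: bb_neq.
move=> a b; rewrite class_y class_xy => /class_b [p [op ->]] /class_b [q [oq ->]] /comm_b.
move/(congr1 odd); rewrite !odd_mod; last by apply/negbTE.
  by rewrite op oq.
by apply/negbTE.
Qed.


Definition gcl (i : 'I_(2 + m.-1)) : {set gT} :=
  if val i == 0%N then y ^: G else if val i == 1%N then (x * y) ^: G
  else (x ^+ (val i).-1) ^: G.

Definition adjb (i j : 'I_(2 + m.-1)) : bool :=
  if (i < 2)%N && (j < 2)%N then (i != j) && ~~ odd m else (i < 2)%N || (j < 2)%N.

Lemma adj_g i j : nccc_adj (gcl i) (gcl j) = adjb i j.
Proof.
have rng : forall n, (n.+2 < 2 + m.-1)%N -> (0 < n.+1 < m)%N.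
  move=> n hn; apply/andP; split => //; lia.
case: i => [[|[|i]] hi]; case: j => [[|[|j]] hj]; rewrite /gcl /adjb /=.
- by rewrite /nccc_adj eqxx.
- by rewrite adj_bb.
- by rewrite class_y adj_bx // rng.
- by rewrite adj_sym adj_bb.
- by rewrite /nccc_adj eqxx.
- by rewrite class_xy adj_bx // rng.
- by rewrite adj_sym class_y adj_bx // rng.
- by rewrite adj_sym class_xy adj_bx // rng.
- by rewrite adj_xx.
Qed.


Lemma gcl_inj : injective gcl.
Proof.
have rng : forall n, (n.+2 < 2 + m.-1)%N -> (0 < n.+1 < m)%N.
  move=> n hn; apply/andP; split => //; lia.
move=> [[|[|i]] hi] [[|[|j]] hj]; rewrite /gcl /= => E; apply: val_inj => //=.
- by move/eqP: bb_neq; rewrite E.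
- by move: (bx_neq 0 j.+1); rewrite -class_y E eqxx.
- by move/eqP: bb_neq; rewrite E.
- by move: (bx_neq 1 j.+1); rewrite -class_xy E eqxx.
- by move: (bx_neq 0 i.+1); rewrite -class_y E eqxx.
- by move: (bx_neq 1 i.+1); rewrite -class_xy E eqxx.
- by rewrite (xx_neq (rng _ hi) (rng _ hj) E).
Qed.

Lemma gcl_in i : gcl i \in nccc_vertices G.
Proof.
have rng : forall n, (n.+2 < 2 + m.-1)%N -> (0 < n.+1 < m)%N.
  move=> n hn; apply/andP; split => //; lia.
apply/imsetP; case: i => [[|[|i]] hi]; rewrite /gcl /=.
- by exists y => //; rewrite inE noncent_y yG.
- by exists (x * y) => //; rewrite inE noncent_xy groupM // ?xG ?yG.
- by exists (x ^+ i.+1) => //; rewrite inE noncent_x ?rng // groupX // xG.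
Qed.

Lemma cover C : C \in nccc_vertices G -> exists i, C = gcl i.
Proof.
case/imsetP => z; rewrite inE => /andP [zZ zG] ->.
have [p [Ez|Ez]] := normal_form zG.
- set r := (p %% (2 * m))%N.
  have Er : z = x ^+ r by rewrite Ez /r -ox expg_mod_order.
  have r2 : (r < 2 * m)%N by rewrite /r ltn_mod muln_gt0; apply: leq_trans m2.
  have r0 : r != 0%N by apply: contra zZ => /eqP r0; rewrite Er r0 group1.
  have rm : r != m by apply: contra zZ => /eqP rm; rewrite Er rm xm_center.
  case: (ltnP r m) => hr.
    have hi : (r.+1 < 2 + m.-1)%N by lia.
    by exists (Ordinal hi); rewrite /gcl /= Er; case: r {Er r2 hi} r0 rm hr => [|[|r]].
  have hi : ((2 * m - r).+1 < 2 + m.-1)%N by lia.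
  exists (Ordinal hi); rewrite /gcl /=.
  have -> : z ^: G = (z ^ y) ^: G by rewrite classGidl // yG.
  have -> : z ^ y = x ^+ (2 * m - r) by rewrite Er conjyX; apply/eqP; rewrite eq_invg_mul -expgD subnKC ?hx // ltnW.
  case E : (2 * m - r)%N => [|[|n]] //; lia.
- have hp := odd_double_half p.
  have -> : z ^: G = (z ^ (x ^+ p./2)) ^: G by rewrite classGidl // groupX // xG.
  have E2 : x ^+ p * y = x ^+ (p./2 + p./2 + odd p) * y by rewrite addnn addnC hp.
  rewrite Ez E2 shift_b.
  case: (boolP (odd p)) => op.
    have hi : (1 < 2 + m.-1)%N by [].
    by exists (Ordinal hi); rewrite /gcl /= expg1.
  have hi : (0 < 2 + m.-1)%N by [].
  by exists (Ordinal hi); rewrite /gcl /= mul1g.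
Qed.


Lemma group_main : exists f : 'I_(2 + m.-1) -> 'I_#|nccc_vertices G|,
  [/\ injective f, #|nccc_vertices G| = (2 + m.-1)%N &
      forall i j, nccc_adj (enum_val (f i)) (enum_val (f j)) = adjb i j].
Proof.
have v0 := gcl_in (Ordinal (isT : (0 < 2 + m.-1)%N)).
pose f i := enum_rank_in v0 (gcl i).
have fK : forall i, enum_val (f i) = gcl i by move=> i; exact: enum_rankK_in (gcl_in i).
exists f; split.
- by move=> i j /(congr1 enum_val); rewrite !fK; exact: gcl_inj.
- have -> : nccc_vertices G = gcl @: setT.
    apply/eqP; rewrite eqEsubset; apply/andP; split; apply/subsetP => C.
      by move/cover => [i ->]; apply/imsetP; exists i.
    by case/imsetP => i _ ->; exact: gcl_in.
  by rewrite card_imset ?cardsT ?card_ord //; exact: gcl_inj.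
- by move=> i j; rewrite !fK adj_g.
Qed.

End Grp.

Section Fin.
Variable R : rcfType.

Lemma prod_nseq (a : R) n : \prod_(l <- nseq n a) ('X - l%:P) = ('X - a%:P) ^+ n.
Proof. by rewrite big_nseq iter_mulr_1. Qed.

Lemma sum_nseq (F : R -> R) a n : \sum_(l <- nseq n a) F l = F a *+ n.
Proof. by rewrite big_nseq iter_addr_0. Qed.

Lemma quad (r1 r2 s p : R) : r1 + r2 = s -> r1 * r2 = p ->
  ('X - r1%:P) * ('X - r2%:P) = 'X * 'X - s%:P * 'X + p%:P.
Proof. by move=> <- <-; rewrite polyCD polyCM; ring. Qed.

Lemma natS k : k.+1%:R = k%:R + 1 :> R.
Proof. by rewrite -natr1. Qed.

Lemma HA_even k : (0 < k)%N ->
  char_poly (pat k 0 0 1 1 : 'M[R]_(2 + k)) = \prod_(l <- nseq (k.+1 - 2) 0 ++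
        [:: -1; (1 + Num.sqrt (8 * k.+1%:R - 7)) / 2; (1 - Num.sqrt (8 * k.+1%:R - 7)) / 2]) ('X - l%:P).
Proof.
move=> k0; rewrite char_pat // big_cat /= prod_nseq !big_cons big_nil subn2 /=.
rewrite -mulrA; congr (_ * _).
set s := Num.sqrt _.
have s2 : s ^+ 2 = 8 * k.+1%:R - 7.
  rewrite sqr_sqrtr // natS; have : (0 <= k%:R :> R) by []; lra.
rewrite mulr1 [X in _ = _ * X](@quad ((1 + s) / 2) ((1 - s) / 2) 1 (- (k%:R * 2))).
- rewrite !polyCD !polyCN !polyCM !polyC_natr; ring.
- by field.
- rewrite (_ : (1 + s) / 2 * ((1 - s) / 2) = (1 - s ^+ 2) / 4); last by field.
  by rewrite s2 natS; field.
Qed.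

Lemma HA_odd k : (0 < k)%N ->
  char_poly (pat k 0 0 1 0 : 'M[R]_(2 + k)) = \prod_(l <- nseq (k.+1 - 1) 0 ++
        [:: 2 * Num.sqrt ((k.+1%:R - 1) / 2); - (2 * Num.sqrt ((k.+1%:R - 1) / 2))]) ('X - l%:P).
Proof.
move=> k0; rewrite char_pat // big_cat /= prod_nseq !big_cons big_nil subn1 /= subr0.
rewrite subrr polyC0 subr0 -exprSr prednK // -mulrA; congr (_ * _).
set s := Num.sqrt _.
have s2 : s ^+ 2 = (k.+1%:R - 1) / 2.
  rewrite sqr_sqrtr // natS; have : (0 <= k%:R :> R) by []; lra.
rewrite mulr1 [X in _ = X](@quad (2 * s) (- (2 * s)) 0 (- (k%:R * 2))).
- rewrite !polyCD !polyCN !polyCM !polyC_natr; ring.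
- by rewrite addrN.
- rewrite (_ : 2 * s * - (2 * s) = - 4 * s ^+ 2); last by ring.
  by rewrite s2 natS; field.
Qed.

Lemma HL_even k : (0 < k)%N ->
  char_poly (pat k 2 (1 + k%:R) (-1) (-1) : 'M[R]_(2 + k)) = \prod_(l <- [:: 0] ++ nseq (k.+1 - 2) 2 ++
        [:: k.+1%:R + 1; k.+1%:R + 1]) ('X - l%:P).
Proof.
move=> k0; rewrite char_pat // !big_cat /= prod_nseq !big_cons !big_nil subn2 /=.
move: (('X - 2%:P) ^+ k.-1) => P.
rewrite natS !polyCD !polyCN !polyCM !polyC_natr; ring.
Qed.

Lemma HQ_even k : (0 < k)%N ->
  char_poly (pat k 2 (1 + k%:R) 1 1 : 'M[R]_(2 + k)) = \prod_(l <- nseq (k.+1 - 2) 2 ++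
        [:: k.+1%:R - 1; (k.+1%:R + 3 + Num.sqrt ((k.+1%:R - 1) * (k.+1%:R + 7))) / 2;
                   (k.+1%:R + 3 - Num.sqrt ((k.+1%:R - 1) * (k.+1%:R + 7))) / 2]) ('X - l%:P).
Proof.
move=> k0; rewrite char_pat // !big_cat /= prod_nseq !big_cons !big_nil subn2 /=.
set s := Num.sqrt _.
have s2 : s ^+ 2 = (k.+1%:R - 1) * (k.+1%:R + 7).
  rewrite sqr_sqrtr // natS; have : (0 <= k%:R :> R) by []; nra.
rewrite mulr1 [X in _ = _ * (_ * X)](@quad _ _ (k.+1%:R + 3) 4).
- move: (('X - 2%:P) ^+ k.-1) => P.
  rewrite natS !polyCD !polyCN !polyCM !polyC_natr; ring.
- by field.
- rewrite (_ : (k.+1%:R + 3 + s) / 2 * ((k.+1%:R + 3 - s) / 2) = ((k.+1%:R + 3) ^+ 2 - s ^+ 2) / 4); last by field.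
  by rewrite s2; field.
Qed.

Lemma HL_odd k : (0 < k)%N ->
  char_poly (pat k 2 (0 + k%:R) (-1) (-0) : 'M[R]_(2 + k)) = \prod_(l <- [:: 0] ++ nseq (k.+1 - 2) 2 ++
        [:: k.+1%:R - 1; k.+1%:R + 1]) ('X - l%:P).
Proof.
move=> k0; rewrite char_pat // !big_cat /= prod_nseq !big_cons !big_nil subn2 /=.
move: (('X - 2%:P) ^+ k.-1) => P.
rewrite natS !polyCD !polyCN !polyCM !polyC_natr; ring.
Qed.

Lemma HQ_odd k : (0 < k)%N ->
  char_poly (pat k 2 (0 + k%:R) 1 0 : 'M[R]_(2 + k)) = \prod_(l <- [:: 0] ++ nseq (k.+1 - 2) 2 ++
        [:: k.+1%:R - 1; k.+1%:R + 1]) ('X - l%:P).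
Proof.
move=> k0; rewrite char_pat // !big_cat /= prod_nseq !big_cons !big_nil subn2 /=.
move: (('X - 2%:P) ^+ k.-1) => P.
rewrite natS !polyCD !polyCN !polyCM !polyC_natr; ring.
Qed.

Lemma EA_even k : (0 < k)%N ->
  1 + Num.sqrt (8 * k.+1%:R - 7) = \sum_(l <- nseq (k.+1 - 2) 0 ++
        [:: -1; (1 + Num.sqrt (8 * k.+1%:R - 7)) / 2; (1 - Num.sqrt (8 * k.+1%:R - 7)) / 2]) `|l - 0| :> R.
Proof.
move=> k0; rewrite big_cat /= sum_nseq !big_cons big_nil !subr0 normr0 mul0rn add0r normrN normr1.
set s := Num.sqrt _.
have s0 : 0 <= s by exact: sqrtr_ge0.
have s2 : s ^+ 2 = 8 * k.+1%:R - 7.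
  rewrite sqr_sqrtr // natS; have : (0 <= k%:R :> R) by []; lra.
have kk : 1 <= k%:R :> R by rewrite ler1n.
have s1 : 1 <= s by rewrite natS in s2; nra.
rewrite (ger0_norm (_ : 0 <= (1 + s) / 2)); last by lra.
rewrite (ler0_norm (_ : (1 - s) / 2 <= 0)); last by lra.
lra.
Qed.

Lemma EA_odd k : (0 < k)%N ->
  4 * Num.sqrt ((k.+1%:R - 1) / 2) = \sum_(l <- nseq (k.+1 - 1) 0 ++
        [:: 2 * Num.sqrt ((k.+1%:R - 1) / 2); - (2 * Num.sqrt ((k.+1%:R - 1) / 2))]) `|l - 0| :> R.
Proof.
move=> k0; rewrite big_cat /= sum_nseq !big_cons big_nil !subr0 normr0 mul0rn add0r normrN.
set s := Num.sqrt _.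
have s0 : 0 <= s by exact: sqrtr_ge0.
rewrite ger0_norm; last by lra.
lra.
Qed.

Lemma EL_even k (D : R) : (0 < k)%N -> D = (2 + 4 * k%:R) / (k%:R + 2) ->
  4 * (k.+1%:R - 1) * (k.+1%:R - 2) / (k.+1%:R + 1) + 4 = \sum_(l <- [:: 0] ++ nseq (k.+1 - 2) 2 ++
        [:: k.+1%:R + 1; k.+1%:R + 1]) `|l - D|.
Proof.
case: k => [//|k] _ hD; rewrite !big_cat /= sum_nseq !big_cons !big_nil subn2 /=.
rewrite ?(natS k.+1) (natS k) in hD *.
set kk := k%:R in hD *.
have k0 : 0 <= kk by [].
have hD' : D * (kk + 3) = 4 * kk + 6.
  by rewrite hD; field; apply/lt0r_neq0; lra.
have D2 : 2 <= D by nra.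
have D3 : D <= kk + 1 + 1 + 1 by nra.
rewrite sub0r normrN (ger0_norm (_ : 0 <= D)); last by lra.
rewrite (ler0_norm (_ : 2 - D <= 0)); last by lra.
rewrite (ger0_norm (_ : 0 <= kk + 1 + 1 + 1 - D)); last by lra.
rewrite -mulr_natr -/kk hD; field; apply/lt0r_neq0; lra.
Qed.

Lemma EL_odd k (D : R) : (1 < k)%N -> D = 4 * k%:R / (k%:R + 2) ->
  4 * (k.+1%:R - 1) * (k.+1%:R - 3) / (k.+1%:R + 1) + 4 = \sum_(l <- [:: 0] ++ nseq (k.+1 - 2) 2 ++
        [:: k.+1%:R - 1; k.+1%:R + 1]) `|l - D|.
Proof.
case: k => [//|k] k1 hD; rewrite !big_cat /= sum_nseq !big_cons !big_nil subn2 /=.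
rewrite ?(natS k.+1) (natS k) in hD *.
set kk := k%:R in hD *.
have k0 : 1 <= kk by rewrite /kk ler1n.
have hD' : D * (kk + 3) = 4 * kk + 4.
  by rewrite hD; field; apply/lt0r_neq0; lra.
have D2 : 2 <= D by nra.
have D3 : D <= kk + 1 by nra.
rewrite sub0r normrN (ger0_norm (_ : 0 <= D)); last by lra.
rewrite (ler0_norm (_ : 2 - D <= 0)); last by lra.
rewrite (ger0_norm (_ : 0 <= kk + 1 + 1 - 1 - D)); last by lra.
rewrite (ger0_norm (_ : 0 <= kk + 1 + 1 + 1 - D)); last by lra.
rewrite -mulr_natr -/kk hD; field; apply/lt0r_neq0; lra.
Qed.

Lemma EQ_even k (D : R) : (0 < k)%N -> ~~ odd k.+1 -> D = (2 + 4 * k%:R) / (k%:R + 2) ->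
  (if k.+1 == 2%N then 4 else 4 * (k.+1%:R - 1) * (k.+1%:R - 2) / (k.+1%:R + 1)
              + (k.+1%:R - 1) * (Num.sqrt (1 + 8 / (k.+1%:R - 1)) - 1))
  = \sum_(l <- nseq (k.+1 - 2) 2 ++
        [:: k.+1%:R - 1; (k.+1%:R + 3 + Num.sqrt ((k.+1%:R - 1) * (k.+1%:R + 7))) / 2;
                   (k.+1%:R + 3 - Num.sqrt ((k.+1%:R - 1) * (k.+1%:R + 7))) / 2]) `|l - D|.
Proof.
case: k => [//|[|[//|k]]] _ ev hD.
- rewrite big_cat /= !big_cons !big_nil /=.
  set s := Num.sqrt _.
  have s0 : 0 <= s by exact: sqrtr_ge0.
  have s2 : s ^+ 2 = 9 by rewrite sqr_sqrtr //; lra.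
  have s3 : s = 3 by nra.
  have D2 : D = 2 by rewrite hD; field.
  rewrite s3 D2.
  rewrite (_ : 2 - 1 - 2 = -1 :> R); last by lra.
  rewrite (_ : (2 + 3 + 3) / 2 - 2 = 2 :> R); last by lra.
  rewrite (_ : (2 + 3 - 3) / 2 - 2 = -1 :> R); last by lra.
  rewrite normrN normr1 ger0_norm //; lra.
- rewrite big_cat sum_nseq !big_cons big_nil subn2 /=.
  rewrite (natS k.+3) (natS k.+2) in hD *.
  set j := k.+2%:R in hD *.
  have j2 : 2 <= j by rewrite /j ler_nat.
  set s := Num.sqrt ((j + 1 + 1 - 1) * (j + 1 + 1 + 7)).
  have s0 : 0 <= s by exact: sqrtr_ge0.
  have s2 : s ^+ 2 = (j + 1 + 1 - 1) * (j + 1 + 1 + 7) by rewrite sqr_sqrtr //; nra.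
  have sK : j + 1 + 2 <= s by nra.
  have hD' : D * (j + 1 + 2) = 2 + 4 * (j + 1).
    by rewrite hD; field; apply/lt0r_neq0; lra.
  have D2 : 2 <= D by nra.
  have D3 : D <= j + 1 by nra.
  have D4 : D <= 4 by nra.
  have hs : (j + 1 + 1 - 1) * Num.sqrt (1 + 8 / (j + 1 + 1 - 1)) = s.
    have e : (j + 1 + 1 - 1) * (j + 1 + 1 + 7) = (j + 1) ^+ 2 * (1 + 8 / (j + 1 + 1 - 1)).
      by field; apply/lt0r_neq0; lra.
    rewrite /s e sqrtrM ?sqr_ge0 // sqrtr_sqr ger0_norm; last by lra.
    by congr (_ * _); ring.
  rewrite (mulrBr (j + 1 + 1 - 1)) hs.
  rewrite (ler0_norm (_ : 2 - D <= 0)); last by lra.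
  rewrite (ger0_norm (_ : 0 <= j + 1 + 1 - 1 - D)); last by lra.
  rewrite (ger0_norm (_ : 0 <= (j + 1 + 1 + 3 + s) / 2 - D)); last by lra.
  rewrite (ler0_norm (_ : (j + 1 + 1 + 3 - s) / 2 - D <= 0)); last by lra.
  rewrite -mulr_natr -/j hD; field; apply/lt0r_neq0; lra.
Qed.
End Fin.


Unset Implicit Arguments.

Theorem corollary2p7 (R : rcfType) (gT : finGroupType) (G : {group gT})
    (x y : gT) (m : nat) :
  (2 <= m)%N ->
  G :=: <<[set x; y]>>%g ->
  (x ^+ (2 * m) = 1)%g -> (x ^+ m = y ^+ 2)%g -> (x ^ y = x^-1)%g ->
  #|G| = (4 * m)%N ->
  let A := nccc_adjmx R G in
  let L := laplacian A in
  let Q := signless_laplacian A in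
  let D := avg_degree A in
  let M := m%:R : R in
  (~~ odd m ->
     is_spectrum A (nseq (m - 2) 0 ++
        [:: -1; (1 + Num.sqrt (8 * M - 7)) / 2; (1 - Num.sqrt (8 * M - 7)) / 2])
   /\ spec_energy A 0 (1 + Num.sqrt (8 * M - 7))
   /\ is_spectrum L ([:: 0] ++ nseq (m - 2) 2 ++ [:: M + 1; M + 1])
   /\ spec_energy L D (4 * (M - 1) * (M - 2) / (M + 1) + 4)
   /\ is_spectrum Q (nseq (m - 2) 2 ++
        [:: M - 1; (M + 3 + Num.sqrt ((M - 1) * (M + 7))) / 2;
                   (M + 3 - Num.sqrt ((M - 1) * (M + 7))) / 2])
   /\ spec_energy Q D
        (if m == 2%N then 4
         else 4 * (M - 1) * (M - 2) / (M + 1)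
              + (M - 1) * (Num.sqrt (1 + 8 / (M - 1)) - 1)))
  /\
  (odd m ->
     is_spectrum A (nseq (m - 1) 0 ++
        [:: 2 * Num.sqrt ((M - 1) / 2); - (2 * Num.sqrt ((M - 1) / 2))])
   /\ spec_energy A 0 (4 * Num.sqrt ((M - 1) / 2))
   /\ is_spectrum L ([:: 0] ++ nseq (m - 2) 2 ++ [:: M - 1; M + 1])
   /\ is_spectrum Q ([:: 0] ++ nseq (m - 2) 2 ++ [:: M - 1; M + 1])
   /\ spec_energy L D (4 * (M - 1) * (M - 3) / (M + 1) + 4)
   /\ spec_energy Q D (4 * (M - 1) * (M - 3) / (M + 1) + 4)).
Proof.
case: m => [//|k] m2 hG hx hxy hc hcard A L Q D M.
have [f [finj hcV hadj]] := group_main m2 hG hx hxy hc hcard.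
pose e : R := (~~ odd k.+1)%:R.
have hAf : forall i j, A (f i) (f j) = pat k 0 0 1 e i j.
  move=> i j; rewrite /A /nccc_adjmx !mxE hadj /adjb /e.
  case: (_ && _) => /=; first by case: (i == j).
  by case: (_ || _); case: (i == j).
have k0 : (0 < k)%N by lia.
have [cA cL cQ hD] := transfer finj hcV hAf.
split.
- move=> ev.
  have e1 : e = 1 by rewrite /e ev.
  rewrite e1 in cA cL cQ hD.
  have hD1 : D = (2 + 4 * k%:R) / (k%:R + 2) by rewrite /D hD natrD; congr (_ / _); ring.
  split; first by rewrite /is_spectrum cA; exact: HA_even.
  split; first by eexists; split; [rewrite /is_spectrum cA; exact: HA_even | exact: EA_even].
  split; first by rewrite /is_spectrum cL; exact: HL_even.
  split; first by eexists; split; [rewrite /is_spectrum cL; exact: HL_even | exact: EL_even hD1].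
  split; first by rewrite /is_spectrum cQ; exact: HQ_even.
  by eexists; split; [rewrite /is_spectrum cQ; exact: HQ_even | exact: EQ_even hD1].
- move=> od.
  have e0 : e = 0 by rewrite /e od.
  rewrite e0 in cA cL cQ hD.
  have k1 : (1 < k)%N by move: k0 od; case: k {A L Q D M f finj hcV hadj e hAf cA cL cQ hD hG hx hxy hcard m2 e0} => [|[|k]].
  have hD0 : D = 4 * k%:R / (k%:R + 2) by rewrite /D hD natrD; congr (_ / _); ring.
  split; first by rewrite /is_spectrum cA; exact: HA_odd.
  split; first by eexists; split; [rewrite /is_spectrum cA; exact: HA_odd | exact: EA_odd].
  split; first by rewrite /is_spectrum cL; exact: HL_odd.
  split; first by rewrite /is_spectrum cQ; exact: HQ_odd.
  split; first by eexists; split; [rewrite /is_spectrum cL; exact: HL_odd | exact: EL_odd hD0].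
  by eexists; split; [rewrite /is_spectrum cQ; exact: HQ_odd | exact: EL_odd hD0].
Qed.
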